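(* Let $d\ge 0$, let $G$ be a countable subgroup of $\mathbb{R}^d$, and let $(H_n)_{n\ge1}$ be a Liouville, symmetric, decreasing sequence of random subsemigroups of $G$ such that for every $n$, $H_n$ spans $\mathbb{R}^d$ as a real vector space. Then almost surely there is no $n$ and no closed half-space $\{x\in\mathbb{R}^d:\langle v,x\rangle\ge 0\}$ ($v\neq 0$) containing $H_n$; i.e. almost surely $H_n$ does not eventually get trapped in a closed half-space.
   Context: Let $\mathfrak{S}(G)$ be the set of subsemigroups of $G$, viewed as a subset of $\{0,1\}^G$ with the product topology. A decreasing sequence $(H_n)$ of $\mathfrak{S}(G)$-valued random variables is Liouville if its tail $\sigma$-algebra $\bigcap_n\sigma(H_n,H_{n+1},\ldots)$ is trivial, and symmetric if for every $n$, $H_n$ and $H_n^{-1}=\{-h:h\in H_n\}$ have the same distribution. *)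

(* Defs.v *)
From HB Require Import structures.
From mathcomp Require Import all_boot all_order all_algebra.
From mathcomp Require Import all_classical all_reals all_analysis.
Set Implicit Arguments. Unset Strict Implicit. Unset Printing Implicit Defensive.
Import Order.TTheory GRing.Theory Num.Theory.
Local Open Scope classical_set_scope.
Local Open Scope ring_scope.

Definition dotv (R : realType) (d : nat) (v x : 'rV[R]_d) : R :=
  \sum_(i < d) v ord0 i * x ord0 i.

Definition is_subgroup (R : realType) (d : nat) (G : set 'rV[R]_d) : Prop :=
  G 0 /\ (forall x y, G x -> G y -> G (x - y)).

Definition is_subsemigroup (R : realType) (d : nat) (G H : set 'rV[R]_d) : Prop :=
  H `<=` G /\ (forall x y, H x -> H y -> H (x + y)).

Definition spans_Rd (R : realType) (d : nat) (H : set 'rV[R]_d) : Prop :=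
  exists s : seq 'rV[R]_d, (forall x, x \in s -> H x) /\ (span s = fullv)%VS.

Definition setNeg (R : realType) (d : nat) (H : set 'rV[R]_d) : set 'rV[R]_d :=
  [set - h | h in H].

(* sigma-algebra on subsets of G (= product sigma-algebra on {0,1}^G, which is
   the Borel sigma-algebra of the product topology since G is countable),
   generated by the coordinate events {S | g \in S}, g in G *)
Definition subset_sigma (R : realType) (d : nat) (G : set 'rV[R]_d)
  : set (set (set 'rV[R]_d)) :=
  <<s [set [set S : set 'rV[R]_d | S g] | g in G] >>.

Definition random_subsets (R : realType) (d : nat) (dO : measure_display)
  (Omega : measurableType dO) (G : set 'rV[R]_d)
  (H : nat -> Omega -> set 'rV[R]_d) : Prop :=
  forall n g, G g -> measurable [set w | H n w g].

Definition future_sigma (R : realType) (d : nat) (Omega : Type)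
  (G : set 'rV[R]_d) (H : nat -> Omega -> set 'rV[R]_d) (n : nat)
  : set (set Omega) :=
  <<s [set A | exists m g, (n <= m)%N /\ G g /\ A = [set w | H m w g]] >>.

Definition liouville (R : realType) (d : nat) (dO : measure_display)
  (Omega : measurableType dO) (P : probability Omega R) (G : set 'rV[R]_d)
  (H : nat -> Omega -> set 'rV[R]_d) : Prop :=
  forall A : set Omega, (forall n, future_sigma G H n A) ->
    P A = 0%E \/ P A = 1%E.

Definition symmetric_seq (R : realType) (d : nat) (dO : measure_display)
  (Omega : measurableType dO) (P : probability Omega R) (G : set 'rV[R]_d)
  (H : nat -> Omega -> set 'rV[R]_d) : Prop :=
  forall n (B : set (set 'rV[R]_d)), subset_sigma G B ->
    P ((H n) @^-1` B) = P ((fun w => setNeg (H n w)) @^-1` B).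

Definition decreasing_subsets (R : realType) (d : nat) (Omega : Type)
  (H : nat -> Omega -> set 'rV[R]_d) : Prop :=
  forall n w, H n.+1 w `<=` H n w.

(* Main.v *)
Require Import Defs.
From HB Require Import structures.
From mathcomp Require Import all_boot all_order all_algebra.
From mathcomp Require Import all_classical all_reals all_analysis.
From mathcomp Require Import ring lra.
Import Order.TTheory GRing.Theory Num.Theory.
Import numFieldTopology.Exports numFieldNormedType.Exports.
Local Open Scope classical_set_scope.
Local Open Scope ring_scope.


Section Geo.
Variables (R : realType) (d : nat).
Implicit Types (v w x y : 'rV[R]_d).

Lemma dotvDl v w x : dotv (v + w) x = dotv v x + dotv w x.
Proof. by rewrite /dotv -big_split /=; apply: eq_bigr => i _; rewrite mxE mulrDl. Qed.
Lemma dotvZl (a : R) v x : dotv (a *: v) x = a * dotv v x.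
Proof. by rewrite /dotv mulr_sumr; apply: eq_bigr => i _; rewrite mxE mulrA. Qed.
Lemma dotvNl v x : dotv (- v) x = - dotv v x.
Proof. by rewrite -scaleN1r dotvZl mulN1r. Qed.
Lemma dotv0l x : dotv 0 x = 0.
Proof. by rewrite /dotv big1 // => i _; rewrite mxE mul0r. Qed.
Lemma dotvC v x : dotv v x = dotv x v.
Proof. by rewrite /dotv; apply: eq_bigr => i _; rewrite mulrC. Qed.
Lemma dotvDr v x y : dotv v (x + y) = dotv v x + dotv v y.
Proof. by rewrite dotvC dotvDl !(dotvC _ v). Qed.
Lemma dotvZr (a : R) v x : dotv v (a *: x) = a * dotv v x.
Proof. by rewrite dotvC dotvZl dotvC. Qed.
Lemma dotv_sumr v n (c : 'I_n -> R) (s : 'I_n -> 'rV[R]_d) :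
  dotv v (\sum_i c i *: s i) = \sum_i c i * dotv v (s i).
Proof.
elim: n c s => [|n IH] c s; first by rewrite !big_ord0 dotvC dotv0l.
by rewrite !big_ord_recr /= dotvDr IH dotvZr.
Qed.
Lemma dotv_self0 v : dotv v v = 0 -> v = 0.
Proof.
move=> h; apply/rowP => j; rewrite mxE; apply/eqP.
have : \sum_(i < d) v ord0 i * v ord0 i == 0 by rewrite -/(dotv v v) h.
rewrite psumr_eq0; last by move=> i _; rewrite -expr2 sqr_ge0.
by move=> /allP /(_ j (mem_index_enum _)); rewrite /= mulf_eq0 orbb.
Qed.

Lemma span_orth (s : seq 'rV[R]_d) v :
  (span s = fullv)%VS -> (forall x, x \in s -> dotv v x = 0) -> v = 0.
Proof.
move=> hs h; apply: dotv_self0.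
have : v \in <<in_tuple s>>%VS by rewrite hs memvf.
move=> /coord_span hv; rewrite {2}hv dotv_sumr big1 // => i _.
by rewrite h ?mulr0 // mem_nth.
Qed.
End Geo.


Section Cone.
Variables (R : realType) (d : nat) (Cm : nat -> set 'rV[R]_d).
Hypothesis hmono : forall m, Cm m `<=` Cm m.+1.
Hypothesis hadd : forall m x y, Cm m x -> Cm m y -> Cm m (x + y).
Hypothesis hscale : forall m (a : R) x, 0 <= a -> Cm m x -> Cm m (a *: x).
Hypothesis h0 : forall m, Cm m 0.
Hypothesis hpoint : forall m x, Cm m x -> Cm m (- x) -> x = 0.
Hypothesis happrox : forall m w (eta : R), Cm m w -> 0 < eta ->
  exists m' z, Cm m' z /\ forall j, `|z ord0 j + w ord0 j| <= eta.

Let K x := exists m, Cm m x.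

Lemma Cmono m m' : (m <= m')%N -> Cm m `<=` Cm m'.
Proof.
move=> /subnK <-; elim: (m' - m)%N => // k IH x /IH; rewrite addSn; exact: hmono.
Qed.

Lemma Kseq (s : seq 'rV[R]_d) : (forall x, x \in s -> K x) ->
  exists m, forall x, x \in s -> Cm m x.
Proof.
elim: s => [|a s IH] h; first by exists 0%N.
have [m1 hm1] := h a (mem_head _ _).
have [m2 hm2] := IH (fun x hx => h x ltac:(by rewrite in_cons hx orbT)).
exists (maxn m1 m2) => x; rewrite in_cons => /orP[/eqP->|hx].
  exact: Cmono (leq_maxl _ _) _ hm1.
exact: Cmono (leq_maxr _ _) _ (hm2 _ hx).
Qed.

Lemma Csum m n (c : 'I_n -> R) (t : 'I_n -> 'rV[R]_d) :
  (forall i, 0 <= c i) -> (forall i, Cm m (t i)) -> Cm m (\sum_i c i *: t i).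
Proof.
move=> hc ht; elim/big_ind: _ => [|x y|i _]; [exact: h0 | exact: hadd | exact: hscale].
Qed.

Lemma absv_le (v : 'rV[R]_d) j : `|v ord0 j| <= \sum_k `|v ord0 k|.
Proof. by rewrite (bigD1 j) //= lerDl sumr_ge0. Qed.

Lemma cone_trivial m v : Cm m v -> v = 0.
Proof.
move=> vC.
pose P k := `[< exists s : seq 'rV[R]_d,
   [/\ size s = k, free s & forall x, x \in s -> K x] >].
have exP : exists k, P k.
  by exists 0%N; apply/asboolP; exists [::]; split => //; exact: nil_free.
have ubP : forall k, P k -> (k <= dim 'rV[R]_d)%N.
  move=> k /asboolP[s [<- fs _]]; rewrite -(eqP fs) -dimvf; apply: dimvS; exact: subvf.
case: (ex_maxnP exP ubP) => k /asboolP[s [sk fs sK]] kmax.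
have Ks : forall x, K x -> x \in << s >>%VS.
  move=> x Kx; apply/negPn/negP => hx.
  have : P k.+1.
    apply/asboolP; exists (x :: s); split; first by rewrite /= sk.
      by rewrite free_cons hx fs.
    by move=> y; rewrite in_cons => /orP[/eqP->|]; [exact: Kx|exact: sK].
  by move=> /kmax; rewrite ltnn.
have [m1 hm1] := Kseq s sK.
pose t := in_tuple s.
pose sig := \sum_(i < size s) t`_i.
have tC : forall i : 'I_(size s), Cm m1 t`_i.
  by move=> i; apply: hm1; apply: mem_nth.
have sigC : Cm m1 sig.
  have -> : sig = \sum_(i < size s) 1 *: t`_i by apply: eq_bigr => i _; rewrite scale1r.
  by apply: Csum => // i.
pose L := \sum_(i < size s) \sum_(j < d) `|coord t i (delta_mx 0 j)|.
have L0 : 0 <= L by rewrite sumr_ge0 // => i _; rewrite sumr_ge0.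
have coordB : forall (y : 'rV[R]_d) i (eta : R), 0 <= eta -> (forall j, `|y ord0 j| <= eta) ->
    `|coord t i y| <= L * eta.
  move=> y i eta he hy; rewrite {1}(row_sum_delta y) linear_sum /=.
  apply: le_trans (ler_norm_sum _ _ _) _.
  apply: (@le_trans _ _ ((\sum_(j < d) `|coord t i (delta_mx 0 j)|) * eta)).
    rewrite mulr_suml; apply: ler_sum => j _; rewrite linearZ normrM mulrC.
    by apply: ler_wpM2l => //; exact: hy.
  apply: ler_wpM2r => //; rewrite /L (bigD1 i) //= lerDl sumr_ge0 // => i' _.
  by rewrite sumr_ge0.
have key : forall y : 'rV[R]_d, y \in << s >>%VS -> (forall i, `|coord t i y| <= 1) ->
    Cm m1 (sig + y).
  move=> y yin hy; rewrite {1}(@coord_span _ _ _ t y yin) /sig -big_split /=.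
  have -> : \sum_(i < size s) (t`_i + coord t i y *: t`_i) =
            \sum_(i < size s) (1 + coord t i y) *: t`_i.
    by apply: eq_bigr => i _; rewrite scalerDl scale1r.
  apply: Csum => // i; have := hy i; rewrite ler_norml => /andP[h1 _]; lra.
pose eta0 := (L + 1)^-1.
have eta0p : 0 < eta0 by rewrite invr_gt0; lra.
have Leta : L * eta0 <= 1.
  by rewrite /eta0 ler_pdivrMr ?mul1r; lra.
have [m2 [z [zC hz]]] := happrox m1 sig (eta0 / 2) sigC ltac:(lra).
pose Sv := \sum_k `|v ord0 k|.
have S0 : 0 <= Sv by rewrite sumr_ge0.
pose eps := eta0 / 2 / (1 + Sv).
have epsp : 0 < eps by rewrite divr_gt0 //; lra.
pose y := - (eps *: v) - (z + sig).
have yin : y \in << s >>%VS.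
  rewrite memvB // ?memvN ?memvZ ?memvD //; first by apply: Ks; exists m.
    by apply: Ks; exists m2.
  by apply: memv_suml => i _; apply: memv_span; apply: mem_nth.
have ysmall : forall j, `|y ord0 j| <= eta0.
  move=> j; rewrite /y !mxE.
  have h1 : `|eps * v ord0 j| <= eta0 / 2.
    rewrite normrM (gtr0_norm epsp).
    have := absv_le v j; rewrite -/Sv => hS.
    have he : eps * (1 + Sv) = eta0 / 2.
      by rewrite /eps mulfVK //; apply: lt0r_neq0; lra.
    have hv0 := normr_ge0 (v ord0 j).
    nra.
  have h2 := hz j.
  have := ler_normB (- (eps * v ord0 j)) (z ord0 j + sig ord0 j).
  rewrite normrN; lra.
have ycoord : forall i, `|coord t i y| <= 1.
  move=> i; apply: le_trans (coordB y i eta0 (ltW eta0p) ysmall) Leta.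
have C1 := key y yin ycoord.
set M := maxn m (maxn m1 m2).
have hM1 : Cm M (sig + y) by apply: Cmono C1; rewrite /M leq_max leq_maxl orbT.
have hM2 : Cm M z by apply: Cmono zC; rewrite /M leq_max leq_maxr orbT.
have hM : Cm M (- (eps *: v)).
  have -> : - (eps *: v) = z + (sig + y).
    by apply/rowP => j; rewrite /y !mxE; ring.
  exact: hadd.
have hMv : Cm M v by apply: Cmono vC; rewrite /M leq_maxl.
apply: (hpoint M v hMv).
have -> : - v = eps^-1 *: (- (eps *: v)).
  by rewrite scalerN scalerA mulVf ?scale1r //; apply: lt0r_neq0.
by apply: hscale => //; rewrite invr_ge0 ltW.
Qed.
End Cone.


Section Sig.
Variables (T : Type) (D : set (set T)).

Lemma sigU A B : <<s D >> A -> <<s D >> B -> <<s D >> (A `|` B).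
Proof.
move=> hA hB; rewrite -bigcup2E; apply: sigma_algebra_bigcup => -[|[|n]] //=.
exact: sigma_algebra0.
Qed.

Lemma sigC A : <<s D >> A -> <<s D >> (~` A).
Proof. by move=> hA; rewrite -setTD; exact: sigma_algebraCD. Qed.

Lemma sigI A B : <<s D >> A -> <<s D >> B -> <<s D >> (A `&` B).
Proof.
by move=> hA hB; rewrite -(setCK (A `&` B)) setCI; apply: sigC; apply: sigU; apply: sigC.
Qed.

Lemma sigT : <<s D >> setT.
Proof. by have := @sigC set0 ltac:(exact: sigma_algebra0); rewrite setC0. Qed.

Lemma sig_bigcap (A : nat -> set T) : (forall k, <<s D >> (A k)) ->
  <<s D >> (\bigcap_k A k).
Proof.
move=> hA; rewrite -(setCK (\bigcap_k A k)) setC_bigcap; apply: sigC.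
by apply: sigma_algebra_bigcup => k; apply: sigC.
Qed.

End Sig.

Lemma sig_preimage (T U : Type) (D : set (set T)) (E : set (set U)) (f : U -> T) :
  (forall A, D A -> <<s E >> (f @^-1` A)) ->
  forall A, <<s D >> A -> <<s E >> (f @^-1` A).
Proof.
move=> hD A hA.
suff : [set A | <<s E >> (f @^-1` A)] A by [].
apply: (smallest_sub _ hD) hA; split.
- have -> : f @^-1` set0 = set0 by exact: preimage_set0.
  exact: sigma_algebra0.
- move=> B hB; rewrite setTD.
  have -> : f @^-1` (~` B) = ~` (f @^-1` B) by rewrite preimage_setC.
  exact: sigC.
- move=> F hF; rewrite [X in <<s E >> X]preimage_bigcup; exact: sigma_algebra_bigcup.
Qed.

Section FinDep.
Variables (R : realType) (d : nat) (G : set 'rV[R]_d).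

Lemma fin_dep_sigma (l : seq 'rV[R]_d) : (forall x, x \in l -> G x) ->
  forall X : set (set 'rV[R]_d),
  (forall S S', (forall x, x \in l -> (S x <-> S' x)) -> X S -> X S') ->
  subset_sigma G X.
Proof.
elim: l => [|x l IH] hl X hX.
  have [[S0 XS0]|nX] := pselect (exists S, X S).
    have -> : X = setT.
      by apply/seteqP; split => // S _; apply: hX XS0.
    exact: sigT.
  have -> : X = set0 by apply/seteqP; split => // S XS; apply: nX; exists S.
  exact: sigma_algebra0.
have hl' : forall y, y \in l -> G y by move=> y yl; apply: hl; rewrite in_cons yl orbT.
pose X1 := [set S : set 'rV[R]_d | X (S `|` [set x])].
pose X0 := [set S : set 'rV[R]_d | X (S `\ x)].
have gx : subset_sigma G [set S | S x].
  by apply: sub_sigma_algebra; exists x => //; apply: hl; exact: mem_head.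
have -> : X = ([set S | S x] `&` X1) `|` (~` [set S | S x] `&` X0).
  apply/seteqP; split => S.
    move=> XS; have [Sx|nSx] := pselect (S x); [left|right]; split => //.
      apply: hX XS => y _; split; [by left|by case => // ->].
    apply: hX XS => y _; split; [by move=> Sy; split => // yx; apply: nSx; rewrite -yx|by case].
  case=> -[Sx XS]; apply: hX XS => y _.
    by split; [case => // ->|by left].
  by split; [case|move=> Sy; split => // yx; apply: Sx; rewrite -yx].
apply: sigU; apply: sigI => //; first (apply: IH => // S S' hSS' XS).
- apply: hX XS => y; rewrite in_cons => /orP[/eqP->|yl].
    by split => _; right.
  by split => -[h|h]; [left; apply/(hSS' _ yl)|right|left; apply/(hSS' _ yl)|right].
- exact: sigC.
- apply: IH => // S S' hSS' XS; apply: hX XS => y; rewrite in_cons => /orP[/eqP->|yl].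
    by split; case => _; case.
  by split; case=> h1 h2; split => //; apply/(hSS' _ yl).
Qed.
End FinDep.


Definition box (R : realType) (d : nat) (c : 'rV[R]_d) (r : R) : set 'rV[R]_d :=
  [set v | forall i, `[c ord0 i - r, c ord0 i + r]%classic (v ord0 i)].
Arguments box {R d}.

Definition XB (R : realType) (d : nat) (G : set 'rV[R]_d) (c : 'rV[R]_d) (r : R)
  : set (set 'rV[R]_d) :=
  [set S | exists w, box c r w /\ forall h, G h -> S h -> 0 <= dotv w h].

Arguments XB {R d}.

Section Compact.
Variables (R : realType) (d : nat).

Lemma box_compact (c : 'rV[R]_d) r : compact (box c r).
Proof.
have h := (@rV_compact R d (fun i => `[c ord0 i - r, c ord0 i + r]%classic)
  (fun i => @segment_compact R _ _)).
exact: h.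
Qed.

Lemma dotv_cont (x : 'rV[R]_d) : continuous (fun w : 'rV[R]_d => dotv w x).
Proof.
rewrite /dotv => w.
apply: (@continuous_big R _ +%R 0 xpredT add_continuous _ (index_enum 'I_d)
   (fun i (w : 'rV[R]_d) => w ord0 i * x ord0 i)) => i _ w'.
by apply: continuousM; [exact: coord_continuous|exact: cst_continuous].
Qed.

Lemma half_closed (x : 'rV[R]_d) : closed [set w : 'rV[R]_d | 0 <= dotv w x].
Proof.
have -> : [set w : 'rV[R]_d | 0 <= dotv w x] =
   (fun w => dotv w x) @^-1` [set y | 0 <= y] by [].
by apply: preimage_closed; [move=> w _; exact: dotv_cont|exact: closed_ge].
Qed.

Lemma compact_nested (A : set 'rV[R]_d) (F : nat -> set 'rV[R]_d) :
  compact A -> (forall k, closed (F k)) -> (forall k, F k.+1 `<=` F k) ->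
  (forall k, exists w, A w /\ F k w) -> exists w, A w /\ forall k, F k w.
Proof.
move=> hA hF hmon hne.
have Fmono : forall i k, (i <= k)%N -> F k `<=` F i.
  move=> i k /subnK <-; elim: (k - i)%N => // n IH x; rewrite addSn => /hmon; exact: IH.
move: hA; rewrite compact_In0 => /(_ nat setT (fun k => A `&` F k)).
case.
- by exists F => // k _.
- move=> D' _; have [w [Aw Fw]] := hne (\max_(i <- finmap.enum_fset D') i).
  exists w => i /= iD; split => //; apply: (Fmono i _ _ _ Fw).
  by apply: (@leq_bigmax_seq _ (finmap.enum_fset D') xpredT id i).
- move=> w hw; exists w; split; first by have [] := hw 0%N I.
  by move=> k; have [] := hw k I.
Qed.
End Compact.


Section XBsec.
Variables (R : realType) (d : nat) (G : set 'rV[R]_d).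

Lemma enumG : countable G -> G 0 ->
  exists g : nat -> 'rV[R]_d, (forall i, G (g i)) /\ (forall h, G h -> exists i, g i = h).
Proof.
move=> /pcard_surjP [g hg] G0.
exists (fun i => if pselect (G (g i)) is left _ then g i else 0); split.
  by move=> i; case: pselect.
move=> h Gh; have [i _ gi] := hg h Gh; exists i.
by case: pselect => [//|]; rewrite gi.
Qed.

Lemma XB_sigma c r : countable G -> G 0 -> subset_sigma G (XB G c r).
Proof.
move=> cG G0; have [g [gG gsurj]] := enumG cG G0.
pose Y k := [set S : set 'rV[R]_d | exists w, box c r w /\
   forall i, (i < k)%N -> S (g i) -> 0 <= dotv w (g i)].
have -> : XB G c r = \bigcap_k Y k.
  apply/seteqP; split => S.
    by move=> [w [bw hw]] k _; exists w; split => // i _; apply: hw.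
  move=> hY.
  pose F := fun k => [set w | forall i, (i < k)%N -> S (g i) -> 0 <= dotv w (g i)].
  have Fc : forall k, closed (F k).
    move=> k.
    have -> : F k =
      \bigcap_(i in [set i | (i < k)%N /\ S (g i)]) [set w | 0 <= dotv w (g i)].
      apply/seteqP; split => w hw.
        by move=> i [ik Si]; apply: hw.
      by move=> i ik Si; apply: (hw i).
    by apply: closed_bigI => i _; exact: half_closed.
  have Fm : forall k, F k.+1 `<=` F k.
    by move=> k w hw i ik; apply: hw; apply: ltnW.
  have Fn : forall k, exists w, box c r w /\ F k w.
    by move=> k; have [w [bw hw]] := hY k I; exists w.
  have [w [bw hw]] := @compact_nested R d (box c r) F (@box_compact R d c r) Fc Fm Fn.
  exists w; split => // h Gh Sh; have [i gi] := gsurj h Gh.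
  by rewrite -gi; apply: (hw i.+1) => //; rewrite gi.
apply: sig_bigcap => k; apply: (@fin_dep_sigma R d G (map g (iota 0 k))).
  by move=> x /mapP [i _ ->]; exact: gG.
move=> S S' hSS [w [bw hw]]; exists w; split => // i ik S'g; apply: hw => //.
by apply/(hSS (g i)) => //; apply/mapP; exists i => //; rewrite mem_iota.
Qed.

Lemma box_neg {c w : 'rV[R]_d} {r : R} : box c r w -> box (- c) r (- w).
Proof.
move=> h i; have := h i; rewrite /= !in_itv /= !mxE => /andP[h1 h2].
by apply/andP; split; lra.
Qed.

Lemma XB_neg (c : 'rV[R]_d) (r : R) (S : set 'rV[R]_d) : is_subgroup G ->
  XB G c r (setNeg S) <-> XB G (- c) r S.
Proof.
move=> [G0 GB].
have GN : forall h, G h -> G (- h) by move=> h Gh; rewrite -sub0r; exact: GB.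
split.
  move=> [w [bw hw]]; exists (- w); split; first exact: box_neg.
  move=> h Gh Sh; rewrite dotvNl.
  have := hw (- h) (GN _ Gh) (ex_intro2 _ _ h Sh erefl).
  rewrite dotvC dotvNl dotvC; lra.
move=> [w [bw hw]]; exists (- w); split.
  by have := box_neg bw; rewrite opprK.
move=> h Gh [h' Sh' hh]; subst h.
have Gh' : G h' by have := GN _ Gh; rewrite opprK.
have e : dotv (- w) (- h') = dotv w h'.
  by rewrite dotvNl dotvC dotvNl opprK dotvC.
by rewrite e; exact: hw.
Qed.
End XBsec.


Theorem mainTheorem6 (R : realType) (d : nat) (dO : measure_display)
  (Omega : measurableType dO) (P : probability Omega R)
  (G : set 'rV[R]_d) (H : nat -> Omega -> set 'rV[R]_d) :
  countable G -> is_subgroup G ->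
  random_subsets G H ->
  (forall n w, is_subsemigroup G (H n w)) ->
  decreasing_subsets H ->
  liouville P G H ->
  symmetric_seq P G H ->
  (forall n w, spans_Rd (H n w)) ->
  {ae P, forall w, forall n (v : 'rV[R]_d), v != 0 ->
     ~ (forall h, H n w h -> 0 <= dotv v h)}.
Proof.
move=> cG sG hmeas hsemi hdec hliou hsym hspan.
have [G0 GB] := sG.
pose D (c : 'rV[R]_d) (r : R) (m : nat) := [set w | XB G c r (H m w)].
pose E c r := \bigcup_m D c r m.
have XBanti : forall c r (S S' : set 'rV[R]_d), S' `<=` S -> XB G c r S -> XB G c r S'.
  by move=> c r S S' hS [w [bw hw]]; exists w; split => // h Gh /hS; exact: hw.
have Dmono : forall c r m m', (m <= m')%N -> D c r m `<=` D c r m'.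
  move=> c r m m' /subnK <-; elim: (m' - m)%N => // k IH w /IH.
  by rewrite addSn /D /=; apply: XBanti; exact: hdec.
have futpre : forall n m X, (n <= m)%N -> subset_sigma G X ->
    future_sigma G H n [set w | X (H m w)].
  move=> n m X nm hX.
  apply: (@sig_preimage _ _ _ _ (H m) _ X hX) => A [g Gg <-].
  by apply: sub_sigma_algebra; exists m, g.
have futmeas : forall n A, future_sigma G H n A -> measurable A.
  move=> n A hA; apply: (smallest_sub (C := sigma_algebra setT) (X := measurable) _ _ hA).
    exact: sigma_algebra_measurable.
  by move=> B [m [g [_ [Gg ->]]]]; exact: hmeas.
have XBs : forall c r, subset_sigma G (XB G c r).
  by move=> c r; exact: (@XB_sigma R d G c r cG G0).
have Dmeas : forall c r m, measurable (D c r m).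
  by move=> c r m; apply: (futmeas 0%N); apply: futpre.
have Efut : forall c r n, future_sigma G H n (E c r).
  move=> c r n; have -> : E c r = \bigcup_k D c r (k + n)%N.
    apply/seteqP; split => w [m _ hm].
      by exists m => //; apply: (Dmono c r m (m + n)%N (leq_addr _ _)).
    by exists (m + n)%N.
  by apply: sigma_algebra_bigcup => k; apply: futpre => //; exact: leq_addl.
have Emeas : forall c r, measurable (E c r).
  by move=> c r; apply: bigcupT_measurable => m; exact: Dmeas.
have Dsym : forall c r m, P (D c r m) = P (D (- c) r m).
  move=> c r m; rewrite (hsym m (XB G c r) (XBs c r)); congr (P _).
  apply/seteqP; split => w /= hw.
    exact: (XB_neg _ _ _ _ _ _ sG).1 hw.
  exact: (XB_neg _ _ _ _ _ _ sG).2 hw.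
have E0 : forall c r, P (E c r) = 0%E -> P (E (- c) r) = 0%E.
  move=> c r h0; apply/(negligibleP P (Emeas _ _)).
  apply: negligible_bigcup => m; apply/(negligibleP P (Dmeas _ _ _)).
  rewrite /= -Dsym; apply/eqP; rewrite -measure_le0 -h0; apply: le_measure.
  - by rewrite inE; exact: Dmeas.
  - by rewrite inE; exact: Emeas.
  - by apply: bigcup_sup.
have Bad : forall c r, P.-negligible [set w | ~ (E c r w <-> E (- c) r w)].
  move=> c r.
  have [h0|h1] := hliou (E c r) (Efut c r).
    have h0' := E0 c r h0.
    apply: (@negligibleS _ _ _ P (E c r `|` E (- c) r)).
      move=> w /= hw; case: (pselect (E c r w)) => [h|nh]; [by left|right].
      by apply: contrapT => nh'; apply: hw; split.
    by apply: negligibleU; apply/(negligibleP P (Emeas _ _)).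
  have h1' : P (E (- c) r) = 1%E.
    have [h0'|//] := hliou (E (- c) r) (Efut _ r).
    by have := E0 (- c) r h0'; rewrite opprK h1 => /eqP; rewrite onee_eq0.
  apply: (@negligibleS _ _ _ P (~` E c r `|` ~` E (- c) r)).
    move=> w /= hw; case: (pselect (E c r w)) => [h|nh]; [right|by left].
    by move=> h'; apply: hw; split.
  apply: negligibleU; apply/(negligibleP P (measurableC (Emeas _ _))).
    have e := probability_setC P (Emeas c r); rewrite h1 -EFinB subrr in e.
    exact: e.
  have e := probability_setC P (Emeas (- c) r); rewrite h1' -EFinB subrr in e.
  exact: e.
pose cq (q : 'rV[rat]_d) : 'rV[R]_d := \row_j ratr (q ord0 j).
pose rk (k : nat) : R := (k.+1%:R)^-1.
pose BadI (i : nat) := if @unpickle ('rV[rat]_d * nat)%type i is Some (q, k)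
  then [set w | ~ (E (cq q) (rk k) w <-> E (- cq q) (rk k) w)] else set0.
apply: (@negligibleS _ _ _ P (\bigcup_i BadI i)); last first.
  apply: negligible_bigcup => i; rewrite /BadI; case: unpickle => [[q k]|].
    exact: Bad.
  exact: negligible_set0.
move=> w hw; apply: contrapT => hn; apply: hw => n v vn0 hv.
have goodI : forall q k, E (cq q) (rk k) w <-> E (- cq q) (rk k) w.
  move=> q k; apply: contrapT => hb; apply: hn; exists (pickle (q, k)) => //.
  by rewrite /BadI pickleK.
pose Cm m := [set x : 'rV[R]_d | forall h, H m w h -> 0 <= dotv x h].
move/eqP: vn0; apply.
apply: (@cone_trivial R d Cm _ _ _ _ _ _ n v hv).
- by move=> m x hx h hh; apply: hx; exact: hdec hh.
- by move=> m x y hx hy h hh; rewrite dotvDl addr_ge0 //; [exact: hx|exact: hy].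
- by move=> m a x a0 hx h hh; rewrite dotvZl mulr_ge0 //; exact: hx.
- by move=> m h _; rewrite dotv0l.
- move=> m x hx hnx; have [s [sH ss]] := hspan m w.
  apply: (@span_orth R d s x ss) => y ys.
  have := hx y (sH y ys); have := hnx y (sH y ys); rewrite dotvNl => h1 h2.
  by apply/eqP; rewrite eq_le; apply/andP; split; lra.
- move=> m x eta hx etap.
  have eta2 : 0 < eta / 2 by lra.
  have [k hk] : exists k, rk k < eta / 2.
    have [N _ hN] := near_infty_natSinv_lt (PosNum eta2).
    by exists N; apply: (hN N) => /=.
  have rkp : 0 < rk k by rewrite /rk invr_gt0 ltr0Sn.
  have [qf hq] := boolp.choice (fun j : 'I_d =>
     @rat_in_itvoo R (x ord0 j - rk k) (x ord0 j + rk k) ltac:(lra)).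
  pose q : 'rV[rat]_d := \row_j qf j.
  have bx : box (cq q) (rk k) x.
    move=> j /=; have := hq j; rewrite !in_itv /= /cq /q !mxE => /andP[h1 h2].
    by apply/andP; split; lra.
  have Ec : E (cq q) (rk k) w.
    exists m => //; exists x; split => // h Gh hh; exact: hx h hh.
  have [m' _ [z [bz hz]]] := (goodI q k).1 Ec.
  exists m', z; split.
    move=> h hh; apply: hz => //; have [sub _] := hsemi m' w; exact: sub h hh.
  move=> j; have := bz j; have := hq j.
  rewrite /= !in_itv /= /cq /q !mxE => /andP[h1 h2] /andP[h3 h4].
  by rewrite ler_norml; apply/andP; split; lra.
Qed.
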